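(* (i) Let $L,L',L''$ be simplicial complexes, and let $\varphi_i: L\to L'$ and $\psi_i: L'\to L''$ be simplicial maps for $i=1,\dots,m$. If $\psi_i\sim\psi_{i+1}$ for all $i=1,\dots,m-1$, then $\mathrm{SD}(\psi_1\circ\varphi_1,\dots,\psi_m\circ\varphi_m)\le\mathrm{SD}(\varphi_1,\dots,\varphi_m)$. Moreover, equality holds provided that for all $i$, $\psi_i$ admits a simplicial map $\mu_i: L''\to L'$ with $\mu_i\circ\psi_i\sim 1_{L'}$, and $\psi_i\circ\varphi_i\sim\psi_j\circ\varphi_j$ for all distinct $i,j$. (ii) Let $\varphi_i: L\to L'$ and $\psi_i: L''\to L$ be simplicial maps for $i=1,\dots,m$. If $\psi_i\sim\psi_{i+1}$ for all $i=1,\dots,m-1$, then $\mathrm{SD}(\varphi_1\circ\psi_1,\dots,\varphi_m\circ\psi_m)\le\mathrm{SD}(\varphi_1,\dots,\varphi_m)$. Moreover, equality holds provided that for all $i$, $\psi_i$ admits a simplicial map $\mu_i: L\to L''$ with $\psi_i\circ\mu_i\sim 1_L$, and $\varphi_i\circ\psi_i\sim\varphi_j\circ\psi_j$ for all distinct $i,j$.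
   Context: Simplicial maps $f,g: K\to K'$ are contiguous if $f(\sigma)\cup g(\sigma)$ is a simplex of $K'$ for every simplex $\sigma$ of $K$; $f\sim g$ (same contiguity class) if there is a finite chain of simplicial maps from $f$ to $g$ with consecutive ones contiguous. For simplicial maps $\varphi_1,\dots,\varphi_m: K\to K'$, $\mathrm{SD}(\varphi_1,\dots,\varphi_m)$ is the least $n\ge0$ such that $K$ is a union of subcomplexes $K_0,\dots,K_n$ with $\varphi_i|_{K_k}\sim\varphi_j|_{K_k}$ for all $i,j$ and $k$. *)

(* Defs.v *)
From mathcomp Require Import all_boot.
From Stdlib Require Import ClassicalEpsilon Relation_Operators.

Set Implicit Arguments.
Unset Strict Implicit.
Unset Printing Implicit Defensive.

(* The vertices of the complex are the v with [set v] a simplex. *)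
Record scomplex (V : finType) := SComplex {
  simplices : {set {set V}};
  _ : set0 \notin simplices;
  _ : forall s t : {set V}, s \in simplices -> t \subset s -> t != set0 ->
        t \in simplices }.

Section Simplicial.
Variables (V W : finType).

Definition simplicial (K : scomplex V) (K' : scomplex W) (f : V -> W) : Prop :=
  forall s, s \in simplices K -> f @: s \in simplices K'.

Definition contiguous (K : scomplex V) (K' : scomplex W) (f g : V -> W) : Prop :=
  simplicial K K' f /\ simplicial K K' g /\
  forall s, s \in simplices K -> (f @: s) :|: (g @: s) \in simplices K'.

Definition contig_class (K : scomplex V) (K' : scomplex W) (f g : V -> W) : Prop :=
  simplicial K K' f /\ simplicial K K' g /\
  clos_refl_trans (V -> W) (contiguous K K') f g.

Definition SD_le (m : nat) (K : scomplex V) (K' : scomplex W)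
  (phi : 'I_m -> V -> W) (n : nat) : Prop :=
  exists Ks : 'I_n.+1 -> scomplex V,
    (forall k, simplices (Ks k) \subset simplices K) /\
    \bigcup_(k < n.+1) simplices (Ks k) = simplices K /\
    (forall k (i j : 'I_m), contig_class (Ks k) K' (phi i) (phi j)).

Definition SD_le_b m K K' phi n : bool :=
  if excluded_middle_informative (@SD_le m K K' phi n) then true else false.

(* SD as an extended natural number: None stands for infinity (no such
   finite cover exists), Some n for the least such n. *)
Definition SD (m : nat) (K : scomplex V) (K' : scomplex W)
  (phi : 'I_m -> V -> W) : option nat :=
  match excluded_middle_informative (exists n, SD_le_b K K' phi n) with
  | left h => Some (ex_minn h)
  | right _ => None
  end.

End Simplicial.

Definition ole (a b : option nat) : Prop :=
  match a, b with
  | _, None => True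
  | None, Some _ => False
  | Some x, Some y => (x <= y)%N
  end.

(* Main.v *)
From Stdlib Require Import ClassicalEpsilon Relation_Operators.
Require Import Defs.
From mathcomp Require Import all_boot.

Set Implicit Arguments.
Unset Strict Implicit.
Unset Printing Implicit Defensive.

Section Lemmas.

Lemma sc_closed (V : finType) (K : scomplex V) (s t : {set V}) :
  s \in simplices K -> t \subset s -> t != set0 -> t \in simplices K.
Proof. by case: K s t. Qed.

Lemma sc_set0 (V : finType) (K : scomplex V) : set0 \notin simplices K.
Proof. by case: K. Qed.

Lemma simpl_comp (U V W : finType) (K0 : scomplex U) (K : scomplex V)
  (K' : scomplex W) h f :
  simplicial K0 K h -> simplicial K K' f -> simplicial K0 K' (f \o h).
Proof. by move=> Hh Hf s Hs; rewrite (imset_comp f h); apply/Hf/Hh. Qed.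

Lemma contig_sym (V W : finType) (K : scomplex V) (K' : scomplex W) f g :
  contiguous K K' f g -> contiguous K K' g f.
Proof. by case=> [Hf [Hg H]]; split=> //; split=> // s Hs; rewrite setUC; apply: H. Qed.

Lemma crt_sym (T : Type) (R : T -> T -> Prop) :
  (forall x y, R x y -> R y x) ->
  forall x y, clos_refl_trans T R x y -> clos_refl_trans T R y x.
Proof.
move=> HR x y H; induction H.
- by apply: rt_step; apply: HR.
- exact: rt_refl.
- exact: rt_trans IHclos_refl_trans2 IHclos_refl_trans1.
Qed.

Lemma cc_sym (V W : finType) (K : scomplex V) (K' : scomplex W) f g :
  contig_class K K' f g -> contig_class K K' g f.
Proof.
case=> [Hf [Hg H]]; split=> //; split=> //.
by apply: crt_sym H => x y; apply: contig_sym.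
Qed.

Lemma cc_refl (V W : finType) (K : scomplex V) (K' : scomplex W) f :
  simplicial K K' f -> contig_class K K' f f.
Proof. by move=> Hf; split=> //; split=> //; apply: rt_refl. Qed.

Lemma cc_trans (V W : finType) (K : scomplex V) (K' : scomplex W) f g h :
  contig_class K K' f g -> contig_class K K' g h -> contig_class K K' f h.
Proof.
case=> [Hf [Hg H1]] [_ [Hh H2]]; split=> //; split=> //.
exact: rt_trans H1 H2.
Qed.

Lemma contig_post (V W X : finType) (K : scomplex V) (K' : scomplex W)
  (K'' : scomplex X) (g : W -> X) f1 f2 :
  simplicial K' K'' g -> contiguous K K' f1 f2 ->
  contiguous K K'' (g \o f1) (g \o f2).
Proof.
move=> Hg [H1 [H2 H]]; split; first (have HH := simpl_comp H1 Hg; exact HH).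
split; first (have HH := simpl_comp H2 Hg; exact HH).
move=> s Hs; rewrite (imset_comp g f1) (imset_comp g f2) -imsetU; apply: Hg; exact: H.
Qed.

Lemma contig_pre (U V W : finType) (K0 : scomplex U) (K : scomplex V)
  (K' : scomplex W) (h : U -> V) f1 f2 :
  simplicial K0 K h -> contiguous K K' f1 f2 ->
  contiguous K0 K' (f1 \o h) (f2 \o h).
Proof.
move=> Hh [H1 [H2 H]]; split; first (have HH := simpl_comp Hh H1; exact HH).
split; first (have HH := simpl_comp Hh H2; exact HH).
move=> s Hs; rewrite (imset_comp f1 h) (imset_comp f2 h); apply: H; exact: Hh.
Qed.

Lemma crt_simpl (V W : finType) (K : scomplex V) (K' : scomplex W) f g :
  clos_refl_trans (V -> W) (contiguous K K') f g ->
  simplicial K K' f -> simplicial K K' g.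
Proof.
move=> H; induction H as [x y Hxy|x|x y z _ IH1 _ IH2].
- by move=> _; case: Hxy => _ [].
- by [].
- by move=> Hx; apply: IH2; apply: IH1.
Qed.

Lemma cc_post (V W X : finType) (K : scomplex V) (K' : scomplex W)
  (K'' : scomplex X) (g : W -> X) f1 f2 :
  simplicial K' K'' g -> contig_class K K' f1 f2 ->
  contig_class K K'' (g \o f1) (g \o f2).
Proof.
move=> Hg [H1 [H2 H]]; split; first (have HH := simpl_comp H1 Hg; exact HH).
split; first (have HH := simpl_comp H2 Hg; exact HH).
induction H as [x y Hxy|x|x y z Hxy IH1 _ IH2].
- apply: rt_step; have HH := contig_post Hg Hxy; exact HH.
- exact: rt_refl.
- have Hy := crt_simpl Hxy H1.
  exact: rt_trans (IH1 H1 Hy) (IH2 Hy H2).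
Qed.

Lemma cc_pre (U V W : finType) (K0 : scomplex U) (K : scomplex V)
  (K' : scomplex W) (h : U -> V) f1 f2 :
  simplicial K0 K h -> contig_class K K' f1 f2 ->
  contig_class K0 K' (f1 \o h) (f2 \o h).
Proof.
move=> Hh [H1 [H2 H]]; split; first (have HH := simpl_comp Hh H1; exact HH).
split; first (have HH := simpl_comp Hh H2; exact HH).
induction H as [x y Hxy|x|x y z Hxy IH1 _ IH2].
- apply: rt_step; have HH := contig_pre Hh Hxy; exact HH.
- exact: rt_refl.
- have Hy := crt_simpl Hxy H1.
  exact: rt_trans (IH1 H1 Hy) (IH2 Hy H2).
Qed.

Lemma cc_chain (V W : finType) (K : scomplex V) (K' : scomplex W) m
  (f : 'I_m -> V -> W) :
  (forall i, simplicial K K' (f i)) ->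
  (forall i j : 'I_m, val j = (val i).+1 -> contig_class K K' (f i) (f j)) ->
  forall i j, contig_class K K' (f i) (f j).
Proof.
move=> Hs Hc.
suff H : forall k (i j : 'I_m), val j = val i + k -> contig_class K K' (f i) (f j).
  move=> i j; case: (leqP (val i) (val j)) => Hij.
    by apply: (H (val j - val i)); rewrite subnKC.
  apply: cc_sym; apply: (H (val i - val j)); rewrite subnKC //; exact: ltnW.
elim=> [|k IH] i j Hj.
  have -> : j = i by apply: val_inj; rewrite Hj addn0.
  exact: cc_refl.
have lt : val i + k < m by have := ltn_ord j; rewrite Hj addnS => /ltnW.
apply: cc_trans (IH i (Ordinal lt) erefl) _.
by apply: Hc; rewrite Hj /= addnS.
Qed.

Lemma SD_le_bP (V W : finType) m (K : scomplex V) (K' : scomplex W)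
  (phi : 'I_m -> V -> W) n : SD_le_b K K' phi n <-> SD_le K K' phi n.
Proof. by rewrite /SD_le_b; case: excluded_middle_informative. Qed.

Lemma SD_of_le (V W : finType) m (K : scomplex V) (K' : scomplex W)
  (phi : 'I_m -> V -> W) n :
  SD_le K K' phi n -> exists k, SD K K' phi = Some k /\ k <= n.
Proof.
move=> H; rewrite /SD; case: excluded_middle_informative => [h|nh].
  exists (ex_minn h); split => //; case: ex_minnP => k _ Hmin; apply: Hmin.
  by apply/SD_le_bP.
by exfalso; apply: nh; exists n; apply/SD_le_bP.
Qed.

Lemma SD_Some (V W : finType) m (K : scomplex V) (K' : scomplex W)
  (phi : 'I_m -> V -> W) n : SD K K' phi = Some n -> SD_le K K' phi n.
Proof.
rewrite /SD; case: excluded_middle_informative => // h [<-].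
by case: ex_minnP => k Hk _; apply/SD_le_bP.
Qed.

Lemma SD0 (V W : finType) m (K : scomplex V) (K' : scomplex W)
  (phi : 'I_m -> V -> W) :
  (forall i j, contig_class K K' (phi i) (phi j)) -> SD K K' phi = Some 0.
Proof.
move=> H.
have [|k [-> ]] := @SD_of_le _ _ _ K K' phi 0; last by rewrite leqn0 => /eqP ->.
exists (fun _ => K); split => //; split => //.
by rewrite big_ord1.
Qed.

Definition pullback (U V : finType) (K0 : scomplex U) (K : scomplex V)
  (h : U -> V) : scomplex U.
refine (@SComplex U [set s in simplices K0 | h @: s \in simplices K] _ _).
- by rewrite inE negb_and sc_set0.
- move=> s t; rewrite !inE => /andP [Hs Hhs] Hts Ht.
  rewrite (sc_closed Hs Hts Ht) /=.
  apply: (sc_closed Hhs); first exact: imsetS.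
  by rewrite imset_eq0.
Defined.

End Lemmas.

Theorem proposition3p7 :
  (* (i) *)
  (forall (V1 V2 V3 : finType) (L : scomplex V1) (L' : scomplex V2)
          (L'' : scomplex V3) (m : nat)
          (phi : 'I_m -> V1 -> V2) (psi : 'I_m -> V2 -> V3),
     (forall i, simplicial L L' (phi i)) ->
     (forall i, simplicial L' L'' (psi i)) ->
     (forall i j : 'I_m, val j = (val i).+1 -> contig_class L' L'' (psi i) (psi j)) ->
     ole (SD L L'' (fun i => psi i \o phi i)) (SD L L' phi) /\
     ((forall i, exists mu : V3 -> V2, simplicial L'' L' mu /\
                   contig_class L' L' (mu \o psi i) id) ->
      (forall i j : 'I_m, i != j ->
         contig_class L L'' (psi i \o phi i) (psi j \o phi j)) ->
      SD L L'' (fun i => psi i \o phi i) = SD L L' phi)) /\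
  (* (ii) *)
  (forall (V1 V2 V3 : finType) (L : scomplex V1) (L' : scomplex V2)
          (L'' : scomplex V3) (m : nat)
          (phi : 'I_m -> V1 -> V2) (psi : 'I_m -> V3 -> V1),
     (forall i, simplicial L L' (phi i)) ->
     (forall i, simplicial L'' L (psi i)) ->
     (forall i j : 'I_m, val j = (val i).+1 -> contig_class L'' L (psi i) (psi j)) ->
     ole (SD L'' L' (fun i => phi i \o psi i)) (SD L L' phi) /\
     ((forall i, exists mu : V1 -> V3, simplicial L L'' mu /\
                   contig_class L L (psi i \o mu) id) ->
      (forall i j : 'I_m, i != j ->
         contig_class L'' L' (phi i \o psi i) (phi j \o psi j)) ->
      SD L'' L' (fun i => phi i \o psi i) = SD L L' phi)).
Proof.
split.
- move=> V1 V2 V3 L L' L'' m phi psi Hphi Hpsi Hc.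
  have Cpsi := cc_chain Hpsi Hc.
  split.
    case E: (SD L L' phi) => [n|]; last by case: (SD L L'' _).
    have [Ks [Hsub [Hcup HK]]] := SD_Some E.
    have [|k [-> /= //]] := @SD_of_le _ _ _ L L'' (fun i => psi i \o phi i) n.
    exists Ks; split => //; split => // k i j /=.
    have Hij := HK k i j.
    have Hj : simplicial (Ks k) L' (phi j) by case: Hij => _ [].
    apply: cc_trans (cc_post (Hpsi i) Hij) _.
    exact: cc_pre Hj (Cpsi i j).
  move=> Hmu Hcomp.
  have E1 : SD L L'' (fun i => psi i \o phi i) = Some 0.
    apply: SD0 => i j; case: (eqVneq i j) => [<-|ne]; last exact: Hcomp.
    by apply: cc_refl; (have HH := simpl_comp (Hphi i) (Hpsi i); exact HH).
  rewrite E1 SD0 // => i j; case: (eqVneq i j) => [<-|ne].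
    exact: cc_refl.
  have [mu [Hmus Hmui]] := Hmu i.
  apply: cc_trans (cc_sym (cc_pre (Hphi i) Hmui)) _.
  apply: cc_trans (cc_post Hmus (Hcomp i j ne)) _.
  apply: cc_trans (cc_post Hmus (cc_pre (Hphi j) (Cpsi j i))) _.
  exact: (cc_pre (Hphi j) Hmui).
- move=> V1 V2 V3 L L' L'' m phi psi Hphi Hpsi Hc.
  have Cpsi := cc_chain Hpsi Hc.
  have Hsimp : forall i, simplicial L'' L' (phi i \o psi i).
    by move=> i; (have HH := simpl_comp (Hpsi i) (Hphi i); exact HH).
  destruct m as [|m'].
    have H0 : SD L'' L' (fun i => phi i \o psi i) = Some 0 by apply: SD0; case.
    split; first by rewrite H0; case: (SD L L' phi).
    by move=> _ _; rewrite H0 SD0 //; case.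
  split.
    case E: (SD L L' phi) => [n|]; last by case: (SD L'' L' _).
    have [Ks [Hsub [Hcup HK]]] := SD_Some E.
    have [|k [-> /= //]] := @SD_of_le _ _ _ L'' L' (fun i => phi i \o psi i) n.
    pose i0 : 'I_m'.+1 := ord0.
    exists (fun k => pullback L'' (Ks k) (psi i0)).
    have Hsub' : forall k, simplices (pullback L'' (Ks k) (psi i0)) \subset simplices L''.
      by move=> k; apply/subsetP => s; rewrite inE => /andP [].
    have Hres : forall k, simplicial (pullback L'' (Ks k) (psi i0)) L'' id.
      by move=> k s Hs; rewrite imset_id; apply: (subsetP (Hsub' k)).
    split => //; split.
      apply/setP => s; apply/bigcupP/idP.
        by case=> k _; apply: (subsetP (Hsub' k)).
      move=> Hs; have : psi i0 @: s \in simplices L by apply: Hpsi.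
      rewrite -Hcup => /bigcupP [k _ Hk]; exists k => //.
      by rewrite inE Hs.
    move=> k i j /=.
    have Hpb : simplicial (pullback L'' (Ks k) (psi i0)) (Ks k) (psi i0).
      by move=> s; rewrite inE => /andP [].
    have R : forall i, contig_class (pullback L'' (Ks k) (psi i0)) L'
                         (phi i \o psi i) (phi i \o psi i0).
      move=> l; apply: cc_post (Hphi l) _.
      exact: (cc_pre (Hres k) (Cpsi l i0)).
    apply: cc_trans (R i) _; apply: cc_trans (cc_sym (R j)).
    exact: cc_pre Hpb (HK k i j).
  move=> Hmu Hcomp.
  have E1 : SD L'' L' (fun i => phi i \o psi i) = Some 0.
    apply: SD0 => i j; case: (eqVneq i j) => [<-|ne]; last exact: Hcomp.
    exact: cc_refl.
  rewrite E1 SD0 // => i j; case: (eqVneq i j) => [<-|ne].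
    exact: cc_refl.
  have [mu [Hmus Hmui]] := Hmu i.
  apply: cc_trans (cc_sym (cc_post (Hphi i) Hmui)) _.
  apply: cc_trans (cc_pre Hmus (Hcomp i j ne)) _.
  apply: cc_trans (cc_post (Hphi j) (cc_pre Hmus (Cpsi j i))) _.
  exact: (cc_post (Hphi j) Hmui).
Qed.
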